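(* Fix an integer $m\ge1$ and a real $\bar c>m$. For $n\in\mathbb{N}$ define $H_2(n)=\max\{M\in\mathbb{N}_0:\lfloor (m+M)^2/4\rfloor\le mn\}$, $H_3(n)=\lfloor\sqrt{n\bar c+1}\rfloor$, $H_4(n)=\lfloor\sqrt{\tfrac14+n\bar c}-\tfrac12\rfloor$, $H_5(n)=\min\big(\lfloor n(\bar c-m)/k_5+m\rfloor,\,n\big)$, where $k_5=\lceil m+\sqrt{m^2+n(\bar c-2m)}\rceil$ if $m^2+n(\bar c-2m)\ge0$ and $k_5=1$ otherwise, and $H_6(n)=\min\big(\lfloor n(\bar c-m)/k_6+m\rfloor,\,n-1\big)$, where $k_6=\lceil m+1+\sqrt{(m+1)^2+n(\bar c-2m)}\rceil$ if $(m+1)^2+n(\bar c-2m)\ge0$ and $k_6=1$ otherwise. Then for every $q\in\{5,6\}$ and $p\in\{2,3,4\}$, $\liminf_{n\to\infty} H_q(n)/H_p(n)\ge1$.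
   Context: These functions are the upper bounds on the maximum degree under which various sufficient conditions guarantee graphicality (with loops) of a bidegree sequence with $n$ entries, minimum degree $m$ and average degree $\bar c$; the claim is purely about the displayed functions. *)

(* Defs.v *)
From Stdlib Require Import Reals ZArith Arith.
Open Scope R_scope.

(* floor and ceiling on R (Int_part r = up r - 1 is the floor of r) *)
Definition floorR (x : R) : Z := Int_part x.
Definition ceilR (x : R) : Z := (- Int_part (- x))%Z.

(* largest M <= k with P M (returns 0 if there is none) *)
Fixpoint max_below (P : nat -> bool) (k : nat) : nat :=
  match k with
  | O => O
  | S k' => if P (S k') then S k' else max_below P k'
  end.

(* Any such M satisfies M <= floor((m+M)^2/4) <= m n, so searching M <= m n
   is exhaustive.  (If the set is empty, which only happens for finitely many
   small n, the value defaults to 0.) *)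
Definition H2 (m : nat) (n : nat) : Z :=
  Z.of_nat (max_below (fun M => Nat.leb (Nat.div ((m + M) * (m + M)) 4) (m * n)) (m * n)).

Definition H3 (c : R) (n : nat) : Z := floorR (sqrt (INR n * c + 1)).

Definition H4 (c : R) (n : nat) : Z := floorR (sqrt (/4 + INR n * c) - /2).

Definition k5 (m : nat) (c : R) (n : nat) : Z :=
  let d := INR m ^ 2 + INR n * (c - 2 * INR m) in
  if Rle_dec 0 d then ceilR (INR m + sqrt d) else 1%Z.

Definition H5 (m : nat) (c : R) (n : nat) : Z :=
  Z.min (floorR (INR n * (c - INR m) / IZR (k5 m c n) + INR m)) (Z.of_nat n).

Definition k6 (m : nat) (c : R) (n : nat) : Z :=
  let d := (INR m + 1) ^ 2 + INR n * (c - 2 * INR m) in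
  if Rle_dec 0 d then ceilR (INR m + 1 + sqrt d) else 1%Z.

Definition H6 (m : nat) (c : R) (n : nat) : Z :=
  Z.min (floorR (INR n * (c - INR m) / IZR (k6 m c n) + INR m)) (Z.of_nat n - 1).

Definition H (q : nat) (m : nat) (c : R) (n : nat) : Z :=
  match q with
  | 2%nat => H2 m n
  | 3%nat => H3 c n
  | 4%nat => H4 c n
  | 5%nat => H5 m c n
  | _ => H6 m c n
  end.

Definition liminf_ge_1 (u : nat -> R) : Prop :=
  forall eps : R, 0 < eps -> exists N : nat, forall n : nat, (N <= n)%nat -> 1 - eps <= u n.

(* Main.v *)
Require Import Defs.
From Stdlib Require Import Reals ZArith Arith Lra Lia Psatz.
Open Scope R_scope.

Lemma floor_le x : IZR (floorR x) <= x.
Proof. unfold floorR; destruct (base_Int_part x); lra. Qed.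
Lemma floor_gt x : x - 1 < IZR (floorR x).
Proof. unfold floorR; destruct (base_Int_part x); lra. Qed.
Lemma ceil_ge x : x <= IZR (ceilR x).
Proof. unfold ceilR; rewrite opp_IZR; destruct (base_Int_part (-x)); lra. Qed.
Lemma ceil_lt x : IZR (ceilR x) < x + 1.
Proof. unfold ceilR; rewrite opp_IZR; destruct (base_Int_part (-x)); lra. Qed.

Lemma sqrt_d_bound (b t : R) (n : nat) : 0 <= b ->
  sqrt (b ^ 2 + INR n * t) <= b + sqrt (Rmax t 0) * sqrt (INR n).
Proof.
  intros hb.
  assert (hT := sqrt_pos (Rmax t 0)). assert (hs := sqrt_pos (INR n)).
  assert (hTs : 0 <= sqrt (Rmax t 0) * sqrt (INR n)) by (apply Rmult_le_pos; auto).
  destruct (Rle_dec (b ^ 2 + INR n * t) 0) as [hle|hlt].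
  - rewrite sqrt_neg_0 by exact hle. lra.
  - rewrite <- (sqrt_pow2 (b + sqrt (Rmax t 0) * sqrt (INR n))) by lra.
    apply sqrt_le_1_alt.
    assert (e1 : sqrt (Rmax t 0) * sqrt (Rmax t 0) = Rmax t 0) by (apply sqrt_sqrt; apply Rmax_r).
    assert (e2 : sqrt (INR n) * sqrt (INR n) = INR n) by (apply sqrt_sqrt; apply pos_INR).
    assert (e3 : (b + sqrt (Rmax t 0) * sqrt (INR n)) ^ 2 =
      b ^ 2 + 2 * b * (sqrt (Rmax t 0) * sqrt (INR n)) +
      (sqrt (Rmax t 0) * sqrt (Rmax t 0)) * (sqrt (INR n) * sqrt (INR n))) by ring.
    rewrite e3, e1, e2.
    assert (t <= Rmax t 0) by apply Rmax_l.
    assert (hn := pos_INR n).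
    assert (INR n * t <= INR n * Rmax t 0) by (apply Rmult_le_compat_l; auto).
    assert (0 <= 2 * b * (sqrt (Rmax t 0) * sqrt (INR n))) by (apply Rmult_le_pos; lra).
    nra.
Qed.

Definition TT (m : nat) (c : R) := sqrt (Rmax (c - 2 * INR m) 0).

Lemma k5_bounds m c n : (1 <= m)%nat ->
  0 < IZR (k5 m c n) <= 2 * INR m + 1 + TT m c * sqrt (INR n).
Proof.
  intros hm. assert (hm1 : 1 <= INR m) by (apply (le_INR 1); exact hm).
  assert (hTs : 0 <= TT m c * sqrt (INR n)) by (apply Rmult_le_pos; apply sqrt_pos).
  unfold k5, TT. destruct (Rle_dec _ _) as [hd|hd].
  - assert (hb := sqrt_d_bound (INR m) (c - 2 * INR m) n ltac:(lra)).
    assert (h1 := ceil_ge (INR m + sqrt (INR m ^ 2 + INR n * (c - 2 * INR m)))).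
    assert (h2 := ceil_lt (INR m + sqrt (INR m ^ 2 + INR n * (c - 2 * INR m)))).
    assert (h3 := sqrt_pos (INR m ^ 2 + INR n * (c - 2 * INR m))).
    unfold TT in hTs. lra.
  - unfold TT in hTs. lra.
Qed.

Lemma k6_bounds m c n : (1 <= m)%nat ->
  0 < IZR (k6 m c n) <= 2 * INR m + 3 + TT m c * sqrt (INR n).
Proof.
  intros hm. assert (hm1 : 1 <= INR m) by (apply (le_INR 1); exact hm).
  assert (hTs : 0 <= TT m c * sqrt (INR n)) by (apply Rmult_le_pos; apply sqrt_pos).
  unfold k6, TT. destruct (Rle_dec _ _) as [hd|hd].
  - assert (hb := sqrt_d_bound (INR m + 1) (c - 2 * INR m) n ltac:(lra)).
    assert (h1 := ceil_ge (INR m + 1 + sqrt ((INR m + 1) ^ 2 + INR n * (c - 2 * INR m)))).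
    assert (h2 := ceil_lt (INR m + 1 + sqrt ((INR m + 1) ^ 2 + INR n * (c - 2 * INR m)))).
    assert (h3 := sqrt_pos ((INR m + 1) ^ 2 + INR n * (c - 2 * INR m))).
    unfold TT in hTs. lra.
  - unfold TT in hTs. lra.
Qed.

Lemma floor_part (n : nat) (a mm k K : R) : 0 <= a -> 0 <= mm -> 0 < k -> k <= K ->
  INR n * a / K - 1 <= IZR (floorR (INR n * a / k + mm)).
Proof.
  intros ha hmm hk hK.
  assert (h := floor_gt (INR n * a / k + mm)).
  assert (INR n * a / K <= INR n * a / k).
  { unfold Rdiv. apply Rmult_le_compat_l.
    - apply Rmult_le_pos; [apply pos_INR | lra].
    - apply Rinv_le_contravar; lra. }
  lra.
Qed.

Lemma H5_lb m c n y : (1 <= m)%nat -> INR m < c ->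
  y <= INR n * (c - INR m) / (2 * INR m + 1 + TT m c * sqrt (INR n)) - 1 ->
  y <= INR n - 1 -> y <= IZR (H5 m c n).
Proof.
  intros hm hc h1 h2. unfold H5.
  destruct (k5_bounds m c n hm) as [hk1 hk2].
  assert (hf := floor_part n (c - INR m) (INR m) _ _ ltac:(lra) (pos_INR m) hk1 hk2).
  destruct (Z.min_spec (floorR (INR n * (c - INR m) / IZR (k5 m c n) + INR m)) (Z.of_nat n))
    as [[_ ->]|[_ ->]].
  - lra.
  - rewrite <- INR_IZR_INZ. lra.
Qed.

Lemma H6_lb m c n y : (1 <= m)%nat -> INR m < c ->
  y <= INR n * (c - INR m) / (2 * INR m + 3 + TT m c * sqrt (INR n)) - 1 ->
  y <= INR n - 1 -> y <= IZR (H6 m c n).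
Proof.
  intros hm hc h1 h2. unfold H6.
  destruct (k6_bounds m c n hm) as [hk1 hk2].
  assert (hf := floor_part n (c - INR m) (INR m) _ _ ltac:(lra) (pos_INR m) hk1 hk2).
  destruct (Z.min_spec (floorR (INR n * (c - INR m) / IZR (k6 m c n) + INR m)) (Z.of_nat n - 1))
    as [[_ ->]|[_ ->]].
  - lra.
  - rewrite minus_IZR, <- INR_IZR_INZ. lra.
Qed.

Lemma max_below_spec P k : max_below P k = 0%nat \/ P (max_below P k) = true.
Proof.
  induction k as [|k IH]; simpl; auto.
  destruct (P (S k)) eqn:E; auto.
Qed.

Lemma max_below_ge P k j : P j = true -> (j <= k)%nat -> (j <= max_below P k)%nat.
Proof.
  intros hP. induction k as [|k IH]; intros hj; simpl.
  - lia.
  - destruct (P (S k)) eqn:E; [lia|].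
    destruct (Nat.eq_dec j (S k)) as [->|hne]; [congruence|]. apply IH. lia.
Qed.

Lemma sq_bound (x A s B : R) : 0 <= A -> 0 <= s -> 0 <= B -> 0 <= x ->
  x * x < A * A * (s * s) + B * B -> x <= A * s + B.
Proof.
  intros hA hs hB hx h.
  assert (hAs : 0 <= A * s) by (apply Rmult_le_pos; auto).
  destruct (Rle_dec x (A * s + B)) as [ok|no]; auto.
  exfalso. apply Rnot_le_lt in no.
  assert ((A * s + B) * (A * s + B) < x * x) by (apply Rmult_le_0_lt_compat; lra).
  assert (A * A * (s * s) = (A * s) * (A * s)) by ring.
  nra.
Qed.

Lemma H3_ub c n : 0 < c -> IZR (H3 c n) <= sqrt c * sqrt (INR n) + 1.
Proof.
  intros hc. unfold H3. eapply Rle_trans; [apply floor_le|].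
  rewrite <- (sqrt_pow2 (sqrt c * sqrt (INR n) + 1)).
  2:{ assert (0 <= sqrt c * sqrt (INR n)) by (apply Rmult_le_pos; apply sqrt_pos). lra. }
  apply sqrt_le_1_alt.
  assert (e1 : sqrt c * sqrt c = c) by (apply sqrt_sqrt; lra).
  assert (e2 : sqrt (INR n) * sqrt (INR n) = INR n) by (apply sqrt_sqrt; apply pos_INR).
  assert (e3 : (sqrt c * sqrt (INR n) + 1) ^ 2 = (sqrt c * sqrt c) * (sqrt (INR n) * sqrt (INR n))
     + 2 * (sqrt c * sqrt (INR n)) + 1) by ring.
  rewrite e3, e1, e2.
  assert (0 <= sqrt c * sqrt (INR n)) by (apply Rmult_le_pos; apply sqrt_pos). lra.
Qed.

Lemma H4_ub c n : 0 < c -> IZR (H4 c n) <= sqrt c * sqrt (INR n) + 1.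
Proof.
  intros hc. unfold H4. eapply Rle_trans; [apply floor_le|].
  assert (0 <= sqrt c * sqrt (INR n)) by (apply Rmult_le_pos; apply sqrt_pos).
  enough (sqrt (/ 4 + INR n * c) <= sqrt c * sqrt (INR n) + 3/2) by lra.
  rewrite <- (sqrt_pow2 (sqrt c * sqrt (INR n) + 3/2)) by lra.
  apply sqrt_le_1_alt.
  assert (e1 : sqrt c * sqrt c = c) by (apply sqrt_sqrt; lra).
  assert (e2 : sqrt (INR n) * sqrt (INR n) = INR n) by (apply sqrt_sqrt; apply pos_INR).
  assert (e3 : (sqrt c * sqrt (INR n) + 3/2) ^ 2 = (sqrt c * sqrt c) * (sqrt (INR n) * sqrt (INR n))
     + 3 * (sqrt c * sqrt (INR n)) + 9/4) by field.
  rewrite e3, e1, e2. lra.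
Qed.

Lemma H2_ub m n : IZR (H2 m n) <= sqrt (4 * INR m) * sqrt (INR n) + 2.
Proof.
  unfold H2. rewrite <- INR_IZR_INZ.
  set (P := fun M => Nat.leb (Nat.div ((m + M) * (m + M)) 4) (m * n)).
  generalize (max_below_spec P (m * n)).
  set (M := max_below P (m * n)).
  assert (hA := sqrt_pos (4 * INR m)). assert (hs := sqrt_pos (INR n)).
  assert (0 <= sqrt (4 * INR m) * sqrt (INR n)) by (apply Rmult_le_pos; auto).
  intros [h0|hP].
  - rewrite h0. simpl. lra.
  - unfold P in hP. apply Nat.leb_le in hP.
    assert (hlt : ((m + M) * (m + M) < 4 * (m * n + 1))%nat).
    { assert (hd := Nat.div_mod_eq ((m + M) * (m + M)) 4).
      assert (hmod := Nat.mod_upper_bound ((m + M) * (m + M)) 4 ltac:(lia)).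
      lia. }
    apply lt_INR in hlt. repeat rewrite ?mult_INR, ?plus_INR in hlt. simpl in hlt.
    apply sq_bound; auto; try lra. apply pos_INR.
    assert (e1 : sqrt (4 * INR m) * sqrt (4 * INR m) = 4 * INR m)
      by (apply sqrt_sqrt; assert (hm := pos_INR m); lra).
    assert (e2 : sqrt (INR n) * sqrt (INR n) = INR n) by (apply sqrt_sqrt; apply pos_INR).
    rewrite e1, e2.
    assert (hm := pos_INR m). assert (hM := pos_INR M).
    nra.
Qed.

Lemma H3_pos c n : 0 < c -> 0 < IZR (H3 c n).
Proof.
  intros hc. unfold H3.
  assert (h := floor_gt (sqrt (INR n * c + 1))).
  assert (1 <= sqrt (INR n * c + 1)).
  { apply Rle_trans with (sqrt 1); [rewrite sqrt_1; lra|]. apply sqrt_le_1_alt. assert (hn := pos_INR n).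
    assert (0 <= INR n * c) by (apply Rmult_le_pos; lra). lra. }
  lra.
Qed.

Lemma H4_pos c n : 1 < c -> (2 <= n)%nat -> 0 < IZR (H4 c n).
Proof.
  intros hc hn. unfold H4.
  assert (h := floor_gt (sqrt (/ 4 + INR n * c) - / 2)).
  assert (3/2 <= sqrt (/ 4 + INR n * c)).
  { rewrite <- (sqrt_pow2 (3/2)) by lra. apply sqrt_le_1_alt.
    assert (hn2 : 2 <= INR n) by (apply (le_INR 2); exact hn).
    assert (2 <= INR n * c) by nra. lra. }
  lra.
Qed.

Lemma H2_pos m n : (1 <= m)%nat -> ((m + 1) * (m + 1) <= n)%nat -> 0 < IZR (H2 m n).
Proof.
  intros hm hn. unfold H2. rewrite <- INR_IZR_INZ.
  assert (h : (1 <= max_below (fun M => Nat.leb (Nat.div ((m + M) * (m + M)) 4) (m * n)) (m * n))%nat).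
  { apply max_below_ge; [|nia]. apply Nat.leb_le.
    assert (Nat.div ((m + 1) * (m + 1)) 4 <= (m + 1) * (m + 1))%nat by (apply Nat.Div0.div_le_upper_bound; lia).
    nia. }
  apply (le_INR 1) in h. change (INR 1) with 1 in h. lra.
Qed.

Lemma asymp (a A B T K eps : R) : 0 < a -> 0 <= A -> 0 <= B -> 0 <= T -> 0 < K ->
  A * T <= a -> 0 < eps -> eps < 1 ->
  exists N : nat, forall n, (N <= n)%nat ->
    (1 - eps) * (A * sqrt (INR n) + B) <= INR n * a / (K + T * sqrt (INR n)) - 1 /\
    (1 - eps) * (A * sqrt (INR n) + B) <= INR n - 1.
Proof.
  intros ha hA hB hT hK hAT he he1.
  set (C := A * K + B * T + T + B * K + K).
  set (S0 := Rmax 1 (Rmax (C / (eps * a)) (A + B + 1))).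
  destruct (INR_unbounded (S0 * S0)) as [N HN].
  exists N. intros n hn.
  set (s := sqrt (INR n)).
  assert (hs2 : s * s = INR n) by (apply sqrt_sqrt; apply pos_INR).
  assert (hS1 : 1 <= S0) by apply Rmax_l.
  assert (hS2 : C / (eps * a) <= S0) by (eapply Rle_trans; [apply Rmax_l | apply Rmax_r]).
  assert (hS3 : A + B + 1 <= S0) by (eapply Rle_trans; [apply Rmax_r | apply Rmax_r]).
  assert (hsS : S0 <= s).
  { unfold s. rewrite <- (sqrt_square S0) by lra. apply sqrt_le_1_alt.
    apply le_INR in hn. lra. }
  assert (hea : 0 < eps * a) by nra.
  assert (hC : C <= eps * a * s).
  { assert (C / (eps * a) <= s) by lra.
    apply Rmult_le_compat_l with (r := eps * a) in H; [|lra].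
    replace (eps * a * (C / (eps * a))) with C in H by (field; lra). lra. }
  rewrite <- hs2.
  assert (hK2 : 0 < K + T * s) by nra.
  split.
  - enough ((1 - eps) * (A * s + B) + 1 <= s * s * a / (K + T * s)) by lra.
    apply Rmult_le_reg_r with (K + T * s); [lra|].
    replace (s * s * a / (K + T * s) * (K + T * s)) with (s * s * a) by (field; lra).
    assert (h1 : (1 - eps) * (A * T) * (s * s) <= (1 - eps) * a * (s * s)).
    { apply Rmult_le_compat_r; [nra|]. apply Rmult_le_compat_l; lra. }
    assert (h2 : (1 - eps) * (A * K + B * T) * s <= (A * K + B * T) * s).
    { apply Rmult_le_compat_r; [lra|]. assert (0 <= A * K + B * T) by nra. nra. }
    assert (h3 : (1 - eps) * B * K + K <= (B * K + K) * s).
    { assert (0 <= B * K) by nra. nra. }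
    assert (h4 : T * s <= T * s) by lra.
    assert (h5 : C * s <= eps * a * s * s) by nra.
    assert (h6 : 1 * ((B * K + K)) <= s * (B * K + K)) by (apply Rmult_le_compat_r; nra).
    replace (((1 - eps) * (A * s + B) + 1) * (K + T * s)) with
      ((1 - eps) * (A * T) * (s * s) + (1 - eps) * (A * K + B * T) * s + ((1 - eps) * B * K + K) + T * s) by ring.
    unfold C in h5. lra.
  - assert (g1 : (A + B + 1) * s <= s * s) by (apply Rmult_le_compat_r; lra).
    assert (g2 : B * 1 <= B * s) by (apply Rmult_le_compat_l; lra).
    assert (g3 : 0 <= A * s + B) by nra.
    assert (g4 : (1 - eps) * (A * s + B) <= A * s + B) by nra.
    lra.
Qed.

Lemma generic (u v : nat -> R) (a A B T K : R) :
  0 < a -> 0 <= A -> 0 <= B -> 0 <= T -> 0 < K -> A * T <= a ->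
  (forall n, v n <= A * sqrt (INR n) + B) ->
  (exists N1, forall n, (N1 <= n)%nat -> 0 < v n) ->
  (forall n y, y <= INR n * a / (K + T * sqrt (INR n)) - 1 -> y <= INR n - 1 -> y <= u n) ->
  liminf_ge_1 (fun n => u n / v n).
Proof.
  intros ha hA hB hT hK hAT hv [N1 hN1] hu eps heps.
  set (e := Rmin eps (1/2)).
  assert (he1 : 0 < e) by (unfold e; apply Rmin_glb_lt; lra).
  assert (he2 : e <= 1/2) by apply Rmin_r.
  assert (he3 : e <= eps) by apply Rmin_l.
  destruct (asymp a A B T K e ha hA hB hT hK hAT he1 ltac:(lra)) as [N hN].
  exists (Nat.max N N1). intros n hn.
  destruct (hN n ltac:(lia)) as [h1 h2].
  assert (hvp := hN1 n ltac:(lia)).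
  assert (hun := hu n _ h1 h2).
  assert (hvn := hv n).
  assert ((1 - e) * v n <= u n) by nra.
  apply Rle_trans with (1 - e); [lra|].
  apply Rmult_le_reg_r with (v n); [lra|].
  replace (u n / v n * v n) with (u n) by (field; lra). lra.
Qed.

Lemma AT_le (A2 m c : R) : 0 <= A2 -> 0 <= m -> m < c ->
  A2 * Rmax (c - 2 * m) 0 <= (c - m) ^ 2 ->
  sqrt A2 * sqrt (Rmax (c - 2 * m) 0) <= c - m.
Proof.
  intros h0 hm hc h. rewrite <- sqrt_mult_alt by lra.
  rewrite <- (sqrt_pow2 (c - m)) by lra. apply sqrt_le_1_alt. exact h.
Qed.

Lemma AT_c m c : 1 <= m -> m < c -> c * Rmax (c - 2 * m) 0 <= (c - m) ^ 2.
Proof.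
  intros. unfold Rmax. destruct (Rle_dec _ _); nra.
Qed.

Lemma AT_m m c : 1 <= m -> m < c -> 4 * m * Rmax (c - 2 * m) 0 <= (c - m) ^ 2.
Proof.
  intros. unfold Rmax. destruct (Rle_dec _ _); [nra|]. assert (0 <= (c - 3 * m) ^ 2) by apply pow2_ge_0. replace ((c - m) ^ 2) with (4 * m * (c - 2 * m) + (c - 3 * m) ^ 2) by ring. lra.
Qed.

Theorem corollary4 (m : nat) (c : R) :
  (1 <= m)%nat -> INR m < c ->
  forall q p : nat, (q = 5%nat \/ q = 6%nat) -> (p = 2%nat \/ p = 3%nat \/ p = 4%nat) ->
  liminf_ge_1 (fun n => IZR (H q m c n) / IZR (H p m c n)).
Proof.
  intros hm hc q p hq hp.
  assert (hm1 : 1 <= INR m) by (apply (le_INR 1); exact hm).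
  assert (ha : 0 < c - INR m) by lra.
  assert (hT : 0 <= TT m c) by apply sqrt_pos.
  assert (hATc : sqrt c * TT m c <= c - INR m)
    by (apply AT_le; try lra; apply AT_c; lra).
  assert (hATm : sqrt (4 * INR m) * TT m c <= c - INR m)
    by (apply AT_le; try lra; apply AT_m; lra).
  assert (hsc := sqrt_pos c). assert (hsm := sqrt_pos (4 * INR m)).
  assert (hu : exists K, 0 < K /\ forall n y,
     y <= INR n * (c - INR m) / (K + TT m c * sqrt (INR n)) - 1 -> y <= INR n - 1 ->
     y <= IZR (H q m c n)).
  { destruct hq as [-> | ->].
    - exists (2 * INR m + 1). split; [lra|]. intros n y; apply H5_lb; auto.
    - exists (2 * INR m + 3). split; [lra|]. intros n y; apply H6_lb; auto. }
  destruct hu as [K [hK hu]].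
  destruct hp as [-> | [-> | ->]].
  - apply (generic _ _ (c - INR m) (sqrt (4 * INR m)) 2 (TT m c) K); auto; try lra.
    + intros n. apply H2_ub.
    + exists ((m + 1) * (m + 1))%nat. intros n hn. apply H2_pos; auto.
  - apply (generic _ _ (c - INR m) (sqrt c) 1 (TT m c) K); auto; try lra.
    + intros n. apply H3_ub. lra.
    + exists 0%nat. intros n _. apply H3_pos. lra.
  - apply (generic _ _ (c - INR m) (sqrt c) 1 (TT m c) K); auto; try lra.
    + intros n. apply H4_ub. lra.
    + exists 2%nat. intros n hn. apply H4_pos; auto. lra.
Qed.
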